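(* Let $s,c\ge 1$ be integers, and suppose that every $s\mathcal{O}$-free graph $G$ with no cycle of length four has at most $|G|^{c}$ ordered induced paths. Then every $s\mathcal{O}$-free graph $G$ has at most $|G|^{d}$ ordered induced paths, where $d=2+(s-1)(c+6)$.
   Context: Graphs are finite and simple; $|G|$ denotes the number of vertices of $G$. Every path has at least one vertex. An ordered induced path is an induced path together with a choice of one of its ends as its first vertex. Two subsets $X,Y$ of $V(G)$ are anticomplete if they are disjoint and no edge joins them; two subgraphs are anticomplete if their vertex sets are. A graph is $s\mathcal{O}$-free if there do not exist $s$ cycles of it that are pairwise vertex-disjoint and pairwise anticomplete. *)

(* Defs.v *)
From mathcomp Require Import all_boot.
Set Implicit Arguments. Unset Strict Implicit. Unset Printing Implicit Defensive.

Definition simple_graph (T : finType) (e : rel T) : Prop :=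
  symmetric e /\ irreflexive e.

Definition is_cycle (T : finType) (e : rel T) (cy : seq T) : bool :=
  [&& 2 < size cy, uniq cy & cycle e cy].

Definition anticomplete (T : finType) (e : rel T) (A B : {set T}) : bool :=
  [disjoint A & B] && [forall x in A, forall y in B, ~~ e x y].

Definition sO_free (s : nat) (T : finType) (e : rel T) : Prop :=
  ~ exists f : 'I_s -> seq T,
      (forall i, is_cycle e (f i)) /\
      (forall i j, i != j -> anticomplete e [set x in f i] [set x in f j]).

Definition no_C4 (T : finType) (e : rel T) : Prop :=
  ~ exists cy : seq T, is_cycle e cy /\ size cy = 4.

Definition ordered_induced_path (T : finType) (e : rel T) (k : nat)
    (t : k.-tuple T) : bool :=
  [&& 0 < k, uniq t &
      [forall i : 'I_k, forall j : 'I_k,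
         e (tnth t i) (tnth t j) == ((i.+1 == j :> nat) || (j.+1 == i :> nat))]].

(* Number of ordered induced paths of G (a path has at most |G| vertices). *)
Definition num_ordered_induced_paths (T : finType) (e : rel T) : nat :=
  \sum_(k < #|T|.+1) #|[pred t : k.-tuple T | ordered_induced_path e t]|.

(* Main.v *)
Require Import Defs.
From mathcomp Require Import all_boot zify.
Set Implicit Arguments. Unset Strict Implicit. Unset Printing Implicit Defensive.


Section IP.
Variables (T : finType) (e : rel T).
Hypothesis esym : symmetric e.
Hypothesis eirr : irreflexive e.

Fixpoint ip (s : seq T) : bool :=
  if s is x :: s' then
    [&& x \notin s', ip s', (if s' is y :: _ then e x y else true)
      & all (fun z => ~~ e x z) (behead s')]
  else true.

Definition good s := (s != [::]) && ip s.

Lemma ip_uniq s : ip s -> uniq s.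
Proof. elim: s => //= x s IH /and4P [H1 H2 _ _]; by rewrite H1 IH. Qed.

Lemma ip_path x s : ip (x :: s) -> path e x s.
Proof.
elim: s x => //= y s IH x /and4P [_ H2 H3 _]; rewrite H3 /=; exact: IH.
Qed.

Lemma ip_catr A B : ip (A ++ B) -> ip B.
Proof. elim: A => //= x A IH /and4P [_ H _ _]; exact: IH. Qed.

Lemma ip_catl A B : ip (A ++ B) -> ip A.
Proof.
elim: A => //= x A IH /and4P [H1 H2 H3 H4].
apply/and4P; split.
- by move: H1; rewrite mem_cat negb_or => /andP [].
- exact: IH.
- by case: A {IH H1 H2 H4} H3.
- case: A {IH H1 H2 H3} H4 => //= y A; rewrite all_cat => /andP [] //.
Qed.

Lemma ip_far A u W : ip (A ++ u :: W) ->
  forall a w, a \in A -> w \in W -> (a != w) && ~~ e a w.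
Proof.
elim: A => //= x A IH /and4P [H1 H2 H3 H4] a w.
rewrite inE => /orP [/eqP -> | aA] wW; last exact: IH.
apply/andP; split.
- apply/negP => /eqP xw; move: H1; rewrite xw mem_cat inE wW.
  by rewrite !orbT.
- have : w \in behead (A ++ u :: W).
    by case: A {IH H1 H2 H3 H4} => //= y A; rewrite mem_cat inE wW !orbT.
  by move/(allP H4).
Qed.

Definition nthcond (x0 : T) s := forall i j, i < size s -> j < size s ->
  e (nth x0 s i) (nth x0 s j) = (i.+1 == j) || (j.+1 == i).

Lemma head_cond x0 x s : ((if s is y :: _ then e x y else true) &&
   all (fun z => ~~ e x z) (behead s)) <->
  (forall j, j < size s -> e x (nth x0 s j) = (j == 0)).
Proof.
case: s => [|y s] /=; first by split.
split.
- move=> /andP [H1 H2] [|j] //= Hj.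
  by apply/negbTE/(allP H2)/mem_nth.
- move=> H; rewrite (H 0) //=; apply/allP => z zs.
  have := H (index z s).+1; rewrite /= ltnS index_mem nth_index // => /(_ zs) ->.
  by [].
Qed.

Lemma ip_nth x0 s : ip s <-> uniq s /\ nthcond x0 s.
Proof.
elim: s => [|x s IH] /=.
  by split => // _; split => // i j.
split.
- move=> /and4P [H1 H2 H3 H4]; have [U N] := IH.1 H2; split; first by rewrite H1 U.
  have HC := (head_cond x0 x s).1 (introT andP (conj H3 H4)).
  move=> [|i] [|j] /= Hi Hj; rewrite ?ltnS in Hi Hj.
  + by rewrite (eirr x).
  + by rewrite HC // orbF eqSS eq_sym.
  + by rewrite esym HC // eqSS; case: i {Hi}.
  + by rewrite N // !eqSS.
- move=> [/andP [H1 U] N].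
  have Ns : nthcond x0 s.
    move=> i j Hi Hj; have := N i.+1 j.+1; rewrite /= !ltnS !eqSS; exact.
  have HC : forall j, j < size s -> e x (nth x0 s j) = (j == 0).
    move=> j Hj; have := N 0 j.+1; rewrite /= ltnS eqSS => ->//.
    by rewrite orbF.
  have /andP [H3 H4] := (head_cond x0 x s).2 HC.
  by rewrite H1 H3 H4 andbT; rewrite andbT; exact: (IH.2 (conj U Ns)).
Qed.

Lemma oip_good k (t : k.-tuple T) : ordered_induced_path e t = good t.
Proof.
rewrite /ordered_induced_path /good.
have Hs : size t = k := size_tuple t.
have -> : (0 < k) = (tval t != [::]) by move: Hs; case: (tval t) => [|? ?] <-.
case Et : (tval t) Hs => [|x s] Hs; first by [].
rewrite -Et /=.
have Hn : (tval t != [::]) by rewrite Et.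
rewrite Hn /=.
apply/idP/idP.
- move=> /andP [U /forallP F]; rewrite Et in U *; apply/(ip_nth x); split => // i j Hi Hj.
  
  have Hi' : i < k by rewrite -Hs.
  have Hj' : j < k by rewrite -Hs.
  have := F (Ordinal Hi') => /forallP /(_ (Ordinal Hj')) /eqP.
  by rewrite !(tnth_nth x) /= Et.
- rewrite Et; move/(ip_nth x) => [U N]; rewrite -Et in U *; rewrite U /=.
  apply/forallP => i; apply/forallP => j; apply/eqP.
  rewrite !(tnth_nth x) /= Et; apply: N => //.
  + by rewrite Hs.
  + by rewrite Hs.
Qed.

End IP.


Lemma size_flatten_le (A B : eqType) (F : A -> seq B) (l : seq A) K :
  (forall x, x \in l -> size (F x) <= K) -> size (flatten (map F l)) <= size l * K.
Proof.
elim: l => //= x l IH H; rewrite size_cat mulSn leq_add //.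
  by apply: H; rewrite inE eqxx.
by apply: IH => y yl; apply: H; rewrite inE yl orbT.
Qed.

Section Lists.
Variable T : finType.

Fixpoint seqs_len (l : seq T) (k : nat) : seq (seq T) :=
  if k is k'.+1 then flatten [seq [seq x :: s | s <- seqs_len l k'] | x <- l]
  else [:: [::]].

Lemma mem_seqs_len l k s : (s \in seqs_len l k) = (size s == k) && all (mem l) s.
Proof.
elim: k s => [|k IH] [|x s] //=.
- apply/negbTE/negP; by move/flatten_mapP => [y _ /mapP [z _]].
- rewrite eqSS; apply/flatten_mapP/idP.
  + move=> [y yl /mapP [z zs [-> ->]]]; move: zs; rewrite IH => /andP [-> ->].
    by rewrite yl.
  + move=> /and3P [H1 H2 H3]; exists x => //; apply/mapP; exists s => //.
    by rewrite IH H1 H3.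
Qed.

Lemma size_seqs_len_le l k : size (seqs_len l k) <= size l ^ k.
Proof.
elim: k => [|k IH] //=; rewrite expnS.
apply: size_flatten_le => x _; rewrite size_map; exact: IH.
Qed.

Definition allseqs := flatten [seq seqs_len (enum T) k | k <- iota 0 #|T|.+1].

Lemma mem_allseqs s : (s \in allseqs) = (size s <= #|T|).
Proof.
apply/flatten_mapP/idP.
- by move=> [k]; rewrite mem_iota add0n ltnS => Hk; rewrite mem_seqs_len => /andP [/eqP ->].
- move=> H; exists (size s); first by rewrite mem_iota add0n ltnS.
  rewrite mem_seqs_len eqxx /=; apply/allP => x _; exact: mem_enum.
Qed.

End Lists.

Section Paths.
Variables (T : finType) (e : rel T).

Definition paths (P : pred T) := undup [seq s <- allseqs T | good e s && all P s].

Lemma good_uniq s : good e s -> uniq s.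
Proof. by move=> /andP [_ /ip_uniq]. Qed.

Lemma good_size s : good e s -> size s <= #|T|.
Proof. move/good_uniq/card_uniqP => <-; exact: max_card. Qed.

Lemma mem_paths P s : (s \in paths P) = good e s && all P s.
Proof.
rewrite mem_undup mem_filter mem_allseqs.
by case G : (good e s) => //=; rewrite good_size // andbT.
Qed.

Lemma paths_uniq P : uniq (paths P).
Proof. exact: undup_uniq. Qed.

Lemma eq_paths (P Q : pred T) : P =1 Q -> paths P = paths Q.
Proof.
move=> H; rewrite /paths; congr undup; apply: eq_filter => s.
by rewrite (eq_all H).
Qed.

Hypothesis esym : symmetric e.
Hypothesis eirr : irreflexive e.

Lemma card_k k : #|[pred t : k.-tuple T | ordered_induced_path e t]| =
  count (fun s => size s == k) (paths predT).
Proof.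
rewrite -size_filter cardE -(size_map val).
apply: perm_size; apply: uniq_perm.
- rewrite map_inj_uniq; [exact: enum_uniq | exact: val_inj].
- by rewrite filter_uniq // paths_uniq.
- move=> s; rewrite mem_filter mem_paths all_predT andbT.
  apply/mapP/idP.
  + move=> [t]; rewrite mem_enum inE => H ->.
    by rewrite size_tuple eqxx -oip_good.
  + move=> /andP [Hs G]; exists (Tuple Hs) => //.
    by rewrite mem_enum inE oip_good.
Qed.

Lemma sum_count (L : seq (seq T)) n : all (fun s => size s <= n) L ->
  \sum_(k < n.+1) count (fun s => size s == k) L = size L.
Proof.
elim: L => [|x L IH] /=; first by rewrite big1.
move=> /andP [Hx HL]; rewrite big_split /= IH //; suff -> : \sum_(i < n.+1) (size x == i) = 1 by [].
rewrite (bigD1 (Ordinal (Hx : size x < n.+1))) //= eqxx big1 // => i /= Hi.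
by rewrite eq_sym; move: Hi; rewrite -val_eqE /= => /negbTE ->.
Qed.

Lemma num_eq : num_ordered_induced_paths e = size (paths predT).
Proof.
rewrite /num_ordered_induced_paths.
under eq_bigr => k _ do rewrite card_k.
apply: sum_count; apply/allP => s; rewrite mem_paths => /andP [G _].
exact: good_size.
Qed.

End Paths.


Lemma antiP (T : finType) (e : rel T) (A B : {set T}) :
  anticomplete e A B <->
  (forall x, x \in A -> x \notin B) /\ (forall x y, x \in A -> y \in B -> ~~ e x y).
Proof.
rewrite /anticomplete; split.
- move=> /andP [D /forallP F]; split.
  + by move=> x xA; rewrite (disjointFr D xA).
  + by move=> x y xA yB; move: (F x); rewrite xA /= => /forallP /(_ y); rewrite yB.
- move=> [D F]; apply/andP; split.
  + apply/pred0P => x /=; case xA: (x \in A) => //=; exact/negbTE/D.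
  + apply/forallP => x; apply/implyP => xA; apply/forallP => y; apply/implyP => yB.
    exact: F.
Qed.

Section Transfer.
Variables (A B : finType) (f : A -> B) (r : rel B).
Hypothesis finj : injective f.

Lemma ip_map s : ip (relpre f r) s = ip r (map f s).
Proof.
elim: s => //= x s ->; rewrite mem_map //; congr [&& _, _, _ & _].
- by case: s.
- by case: s => //= y s; rewrite all_map.
Qed.

Lemma good_map s : good (relpre f r) s = good r (map f s).
Proof. by rewrite /good ip_map; case: s. Qed.

Lemma is_cycle_map s : is_cycle (relpre f r) s = is_cycle r (map f s).
Proof. by rewrite /is_cycle size_map map_inj_uniq // cycle_map. Qed.

End Transfer.

Section Sets.
Variables (T : finType) (e : rel T).

Definition Ofree t (S : {set T}) := ~ exists f : 'I_t -> seq T,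
  (forall i, is_cycle e (f i) && all (fun x => x \in S) (f i)) /\
  (forall i j, i != j -> anticomplete e [set x in f i] [set x in f j]).

Definition noC4 (S : {set T}) := ~ exists cy,
  [&& is_cycle e cy, size cy == 4 & all (fun x => x \in S) cy].

Lemma Ofree_mono t t' (S S' : {set T}) : Ofree t S -> t <= t' -> S' \subset S -> Ofree t' S'.
Proof.
move=> H tt' SS [g [G1 G2]]; apply: H.
exists (fun i => g (widen_ord tt' i)); split.
- move=> i; have /andP [-> /allP A] := G1 (widen_ord tt' i); apply/allP => x xi.
  exact: (subsetP SS _ (A x xi)).
- move=> i j ij; apply: G2; apply: contra ij => /eqP H.
  by apply/eqP/val_inj; move: H => /(congr1 val).
Qed.

Variable S : {set T}.
Definition ST := {x : T | x \in S}.
Definition eS : rel ST := relpre val e.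

Lemma paths_sub : size (paths e (fun x => x \in S)) <= size (paths eS predT).
Proof.
rewrite -(size_map (map val)); apply: uniq_leq_size; first exact: paths_uniq.
move=> s; rewrite mem_paths => /andP [G AS].
apply/mapP; exists (pmap insub s).
- rewrite mem_paths all_predT andbT good_map; last exact: val_inj.
  by rewrite (pmap_filter (@insubK _ _ ST)) (eq_in_filter (a2 := predT)) ?filter_predT //;
   move=> x xs; rewrite insubT //; exact: (allP AS).
- rewrite (pmap_filter (@insubK _ _ ST)).
  rewrite (eq_in_filter (a2 := predT)) ?filter_predT //.
  move=> x xs /=; rewrite insubT //; exact: (allP AS).
Qed.

Lemma card_ST : #|{: ST}| = #|S|.
Proof. by rewrite card_sig; apply: eq_card => x. Qed.

Lemma simple_ST : simple_graph e -> simple_graph eS.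
Proof. by move=> [H1 H2]; split => [x y|x]; rewrite /eS /=. Qed.

Lemma sO_free_ST s : Ofree s S -> sO_free s eS.
Proof.
move=> H [g [G1 G2]]; apply: H; exists (fun i => map val (g i)); split.
- move=> i; rewrite -is_cycle_map; last exact: val_inj.
  rewrite G1 /=; apply/allP => x /mapP [y _ ->]; exact: (valP y).
- move=> i j ij; have [D F] := (antiP _ _ _).1 (G2 i j ij); apply/antiP; split.
  + move=> x; rewrite !inE => /mapP [y yi ->]; apply/mapP => [[z zj /val_inj yz]].
    by move: (D y); rewrite !inE yi yz zj => /(_ isT).
  + move=> x y; rewrite !inE => /mapP [x' xi ->] /mapP [y' yj ->].
    by apply: (F x' y'); rewrite inE.
Qed.

Lemma no_C4_ST : noC4 S -> no_C4 eS.
Proof.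
move=> H [cy [C1 C2]]; apply: H; exists (map val cy).
rewrite -is_cycle_map; last exact: val_inj.
rewrite C1 size_map C2 /=; apply/allP => x /mapP [y _ ->]; exact: (valP y).
Qed.

End Sets.


Section Forest.
Variables (T : finType) (e : rel T).
Hypothesis esym : symmetric e.
Hypothesis eirr : irreflexive e.
Variable S : {set T}.
Hypothesis F : Ofree e 1 S.

Lemma no_cycle cy : is_cycle e cy -> all (fun x => x \in S) cy -> False.
Proof.
move=> C AS; apply: F; exists (fun _ => cy); split.
- by move=> _; rewrite C AS.
- by move=> i j; rewrite !ord1 eqxx.
Qed.

Lemma two_paths_cycle x W V : uniq (x :: W) -> uniq (x :: V) ->
  path e x W -> path e x V -> has (fun u => u \in V) W ->
  head x W != head x V ->
  exists cy, is_cycle e cy /\ {subset cy <= x :: W ++ V}.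
Proof.
move=> UW UV PW PV hW hd.
set j := find (fun u => u \in V) W.
have jW : j < size W by rewrite -has_find.
set w := nth x W j.
have wV : w \in V by exact: (nth_find x hW).
set j' := index w V.
have j'V : j' < size V by rewrite index_mem.
have TW : take j.+1 W = rcons (take j W) w by rewrite (take_nth x).
have TV : take j'.+1 V = rcons (take j' V) w by rewrite (take_nth x) // nth_index.
have nTW : forall u, u \in take j W -> u \notin V.
  move=> u uj; apply/negP => uV.
  have : has (fun u => u \in V) (take j W) by apply/hasP; exists u.
  by rewrite has_take // ltnn.
have wTV : w \notin take j' V by rewrite in_take // ltnn.
exists (x :: (take j.+1 W ++ rev (take j' V))); split; last first.
  move=> u; rewrite !inE !mem_cat mem_rev => /orP [->//|/orP [/mem_take ->|/mem_take ->]];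
  by rewrite ?orbT.
rewrite /is_cycle; apply/and3P; split.
- rewrite /= size_cat size_rev !size_takel //; last exact: ltnW.
  rewrite !ltnS lt0n addn_eq0; apply/negP => /andP [/eqP j0 /eqP j'0].
  move: hd; apply/negP; rewrite negbK.
  have wy : w = head x W by rewrite /w /j j0 nth0.
  have := nth_index x wV; rewrite -/j' j'0 nth0 => ->.
  by rewrite wy.
- move: UW UV; rewrite !cons_uniq => /andP [xW UW] /andP [xV UV].
  have xT1 : x \notin take j.+1 W by apply: contra xW; exact: mem_take.
  have xT2 : x \notin take j' V by apply: contra xV; exact: mem_take.
  have D : ~~ has (fun u => u \in take j.+1 W) (rev (take j' V)).
    apply/hasPn => u; rewrite mem_rev => uT.
    rewrite TW mem_rcons inE negb_or; apply/andP; split.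
    * by apply: contra wTV => /eqP <-.
    * by apply/negP => /nTW; rewrite (mem_take uT).
  apply/andP; split; first by rewrite mem_cat mem_rev negb_or xT1 xT2.
  by rewrite cat_uniq rev_uniq !take_uniq //; apply/and3P.
- rewrite /= rcons_cat cat_path; apply/andP; split.
    by have := PW; rewrite -{1}(cat_take_drop j.+1 W) cat_path => /andP [].
  rewrite TW last_rcons -rev_cons.
  have -> : x :: take j' V = belast x (take j'.+1 V) by rewrite TV belast_rcons.
  have -> : w = last x (take j'.+1 V) by rewrite TV last_rcons.
  rewrite rev_path.
  have -> : path (fun z => e^~ z) x (take j'.+1 V) = path e x (take j'.+1 V).
    by apply: eq_path => a b; rewrite esym.
  by have := PV; rewrite -{1}(cat_take_drop j'.+1 V) cat_path => /andP [].
Qed.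

Lemma forest_uniq P x Q : ip e (x :: P) -> ip e (x :: Q) ->
  all (fun y => y \in S) (x :: P) -> all (fun y => y \in S) (x :: Q) ->
  last x P = last x Q -> P = Q.
Proof.
elim: P x Q => [|y P IH] x [|z Q] //.
- rewrite /=; move=> _ /and4P [H1 _ _ _] _ _ L; exfalso; move: H1.
  by rewrite L; have := mem_last z Q; rewrite inE => ->.
- rewrite /=; move=> /and4P [H1 _ _ _] _ _ _ L; exfalso; move: H1.
  by rewrite -L; have := mem_last y P; rewrite inE => ->.
move=> IP IQ SP SQ L.
case: (eqVneq y z) => [yz | yz].
  subst z; congr (_ :: _); apply: (IH y) => //.
  - by move: IP => /= /and4P [].
  - by move: IQ => /= /and4P [].
  - by move: SP => /andP [].
  - by move: SQ => /andP [].
exfalso.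
have hW : has (fun u => u \in z :: Q) (y :: P).
  apply/hasP; exists (last y P); first exact: mem_last.
  by rewrite /= in L; rewrite L; exact: mem_last.
have [cy [C Sub]] := @two_paths_cycle x (y :: P) (z :: Q) (ip_uniq IP) (ip_uniq IQ)
   (ip_path IP) (ip_path IQ) hW yz.
apply: (no_cycle C); apply/allP => u /Sub; rewrite inE mem_cat => /orP [/eqP ->|/orP [uP|uQ]].
- by move: SP => /andP [].
- by apply: (allP SP); rewrite inE uP orbT.
- by apply: (allP SQ); rewrite inE uQ orbT.
Qed.

Lemma forest_bound : size (paths e (fun x => x \in S)) <= #|S| ^ 2.
Proof.
pose key (P : seq T) := if P is x :: P' then Some (x, last x P') else None.
rewrite -(size_map key).
have -> : #|S| ^ 2 = size [seq Some (a, b) | a <- enum S, b <- enum S].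
  by rewrite size_allpairs -cardE mulnn.
apply: uniq_leq_size.
- rewrite map_inj_in_uniq; first exact: paths_uniq.
  move=> P Q; rewrite !mem_paths => /andP [G1 A1] /andP [G2 A2].
  case: P G1 A1 => [|x P] G1 A1; first by case/andP: G1.
  case: Q G2 A2 => [|y Q] G2 A2; first by case/andP: G2.
  move=> [xy L]; subst y; congr (_ :: _); apply: (forest_uniq (x := x)) => //.
- move=> k /mapP [P]; rewrite mem_paths => /andP [G A] ->.
  case: P G A => [|x P] G A; first by case/andP: G.
  apply: allpairs_f; rewrite mem_enum; apply: (allP A) => //.
  + by rewrite inE eqxx.
  + exact: mem_last.
Qed.

End Forest.


Lemma argmax_seq (A : eqType) (f : A -> nat) (l : seq A) : l != [::] ->
  exists2 x, x \in l & forall y, y \in l -> f y <= f x.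
Proof.
elim: l => [//|a l IH] _.
case: (eqVneq l [::]) => [-> | ln].
  by exists a => [|y]; rewrite ?inE // => /eqP ->.
have [b bl Hb] := IH ln.
case: (leqP (f a) (f b)) => H.
- exists b; first by rewrite inE bl orbT.
  by move=> y; rewrite inE => /orP [/eqP ->|/Hb].
- exists a; first by rewrite inE eqxx.
  move=> y; rewrite inE => /orP [/eqP ->//|/Hb Hy]; exact: (leq_trans Hy (ltnW H)).
Qed.



Lemma pw_lemma n k : 1 <= n -> (n - 1) ^ k.+1 + n ^ k <= n ^ k.+1.
Proof.
move=> Hn; elim: k => [|k IH]; first by rewrite !expn1 expn0; lia.
move: IH; rewrite !(expnS _ k.+1) (expnS n k).
move: ((n-1) ^ k.+1) (n ^ k) => A C H.
have {}H : A + C <= n * C by [].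
nia.
Qed.

Lemma expn_mono n c d : 1 <= c -> c <= d -> n ^ c <= n ^ d.
Proof.
move=> Hc Hcd; case: n => [|n]; first by rewrite exp0n.
exact: leq_pexp2l.
Qed.

Section Suf.
Variable T : finType.
Fixpoint suf (N : {set T}) (P : seq T) : seq T :=
  if P is x :: s then
    (if all (fun y => y \notin N) (x :: s) then x :: s else suf N s)
  else [::].

Lemma suf_all (N : {set T}) P : all (fun y => y \notin N) (suf N P).
Proof. elim: P => //= x s IH; case: ifP => //. Qed.

Lemma suf_split (N : {set T}) P : exists pre, P = pre ++ suf N P.
Proof.
elim: P => [|x s [pre IH]]; first by exists [::].
rewrite /=; case: ifP => _; first by exists [::].
by exists (x :: pre); rewrite /= -IH.
Qed.

Lemma suf_max (N : {set T}) P pre q : P = pre ++ q -> all (fun y => y \notin N) q ->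
  size q <= size (suf N P).
Proof.
elim: pre P => [|x pre IH] P -> Hq.
- case: q Hq => //= y q Hq; by rewrite Hq.
- rewrite /=; case: ifP => _.
  + by rewrite /= size_cat ltnW // ltnS leq_addl.
  + exact: IH.
Qed.
End Suf.


Lemma arith1 n a : 1 <= n -> 1 <= a -> 1 + (n - 1) ^ a <= n ^ a.
Proof.
move=> Hn Ha; case: a Ha => [//|a] _.
have := pw_lemma a Hn; have : 0 < n ^ a by rewrite expn_gt0 Hn.
lia.
Qed.

Lemma arith2 n c : 2 <= n -> 2 <= c ->
  1 + n * (1 + n * (1 + (n - 1) ^ c)) <= n ^ (c + 2).
Proof.
move=> Hn Hc; case: c Hc => [//|c] Hc.
have H := pw_lemma c (ltnW Hn).
have Hv : n <= n ^ c.
  by rewrite -{1}(expn1 n); apply: leq_pexp2l; [lia | lia].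
rewrite addn2; move: H Hv; move: ((n - 1) ^ c.+1) => U.
rewrite !expnS; move: (n ^ c) => V H Hv.
have H1 : n * n * (U + V) <= n * n * (n * V) by rewrite leq_mul2l; apply/orP; right.
have H2 : n * n * n <= n * n * V by rewrite leq_mul2l; apply/orP; right.
have H3 : 1 + n + n * n <= n * n * n by nia.
nia.
Qed.

Lemma arith n a c : 2 <= n -> 2 <= c -> 1 <= a ->
  n ^ 4 * ((1 + (n - 1) ^ a) * (1 + n * (1 + n * (1 + (n - 1) ^ c))))
  <= n ^ (a + c + 6).
Proof.
move=> Hn Hc Ha.
have -> : a + c + 6 = 4 + (a + (c + 2)) by lia.
rewrite expnD (expnD n a); apply: leq_mul => //; apply: leq_mul.
- apply: arith1; lia.
- exact: arith2.
Qed.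


Section Main.
Variables (T : finType) (e : rel T).
Hypothesis esym : symmetric e.
Hypothesis eirr : irreflexive e.

Definition nb (X : seq T) : {set T} := [set y | has (fun x => (x == y) || e x y) X].

Lemma nb_self X x : x \in X -> x \in nb X.
Proof. move=> xX; rewrite inE; apply/hasP; exists x => //; by rewrite eqxx. Qed.

Lemma nb_adj X x y : x \in X -> e x y -> y \in nb X.
Proof. move=> xX exy; rewrite inE; apply/hasP; exists x => //; by rewrite exy orbT. Qed.

Lemma Ofree_del t (S : {set T}) X : Ofree e t.+1 S -> is_cycle e X ->
  all (fun x => x \in S) X -> Ofree e t (S :\: nb X).
Proof.
move=> H CX SX [f [F1 F2]]; apply: H.
have FS : forall i x, x \in f i -> x \notin nb X.
  by move=> i x xi; have /andP [_ /allP A] := F1 i; have := A x xi; rewrite in_setD => /andP [].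
have AX : forall i, anticomplete e [set x in f i] [set x in X].
  move=> i; apply/antiP; split.
  - move=> x; rewrite !inE => xi; apply: contra (FS i x xi); exact: nb_self.
  - move=> x y; rewrite !inE => xi yX; apply/negP => exy.
    by move: (FS i x xi); rewrite (nb_adj yX) // esym.
exists (fun i => if unlift ord_max i is Some j then f j else X); split.
- move=> i; case: unliftP => [j _|_]; last by rewrite CX SX.
  have /andP [-> /allP A] := F1 j; apply/allP => x /A; rewrite in_setD => /andP [_ ->].
  by [].
- move=> i j ij; case: unliftP => [i' Ei|Ei]; case: unliftP => [j' Ej|Ej].
  + apply: F2; apply/eqP => E; move/eqP: ij; apply; by rewrite Ei Ej E.
  + exact: AX.
  + have [D N] := (antiP _ _ _).1 (AX j'); apply/antiP; split.
    * by move=> x xX; apply/negP => /D; rewrite xX.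
    * by move=> x y xX yj; rewrite esym; apply: N.
  + by rewrite Ei Ej eqxx in ij.
Qed.

End Main.


Lemma card_setD_lt (T : finType) (S Y : {set T}) y : y \in S -> y \in Y ->
  #|S :\: Y| <= #|S| - 1.
Proof.
move=> yS yY; have := cardsID Y S.
have : 0 < #|S :&: Y| by apply/card_gt0P; exists y; rewrite in_setI yS yY.
lia.
Qed.

Section MainInd.
Variables (T : finType) (e : rel T).
Hypothesis esym : symmetric e.
Hypothesis eirr : irreflexive e.
Variables (s c : nat).
Hypothesis c2 : 2 <= c.
Hypothesis Hyp : forall S : {set T}, Ofree e s S -> noC4 e S ->
  size (paths e (fun x => x \in S)) <= #|S| ^ c.

Lemma main t : t < s -> forall S : {set T}, Ofree e t.+1 S ->
  size (paths e (fun x => x \in S)) <= #|S| ^ (2 + t * (c + 6)).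
Proof.
elim: t => [|t IH] Hts S HS.
  by rewrite mul0n addn0; apply: forest_bound.
have HsS : Ofree e s S := Ofree_mono HS Hts (subxx S).
have -> : 2 + t.+1 * (c + 6) = (2 + t * (c + 6)) + c + 6 by rewrite mulSn; lia.
move: (IH (ltnW Hts)) => {}IH.
set a := 2 + t * (c + 6).
set n := #|S|.
pose LX := [seq X <- seqs_len (enum S) 4 | is_cycle e X].
have LXP : forall X, X \in LX -> is_cycle e X && all (fun x => x \in S) X.
  move=> X; rewrite mem_filter mem_seqs_len => /and3P [-> _ /allP A] /=.
  by apply/allP => x /A H; rewrite -mem_enum.
have LXC : forall X, is_cycle e X -> size X == 4 -> all (fun x => x \in S) X -> X \in LX.
  move=> X C Sz A; rewrite mem_filter C mem_seqs_len Sz /=.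
  by apply/allP => x /(allP A) H; rewrite /= mem_enum.
case: (eqVneq LX [::]) => [LX0 | LXn].
  apply: (leq_trans (Hyp HsS _)).
  - move=> [cy /and3P [C Sz A]]; have := LXC cy C Sz A; by rewrite LX0.
  - by apply: expn_mono; lia.
pose C4b (Y : {set T}) := has (fun X => all (fun x => x \in Y) X) LX.
pose PS (Y : {set T}) := paths e (fun x => x \in Y).
pose Bl X := [::] :: PS (S :\: nb e X).
pose Al v B := [::] :: (if C4b (S :\: nb e (v :: B)) then [::] else
   flatten [seq [seq rcons A u | A <- [::] :: PS (S :\: nb e (v :: B))] | u <- enum S]).
pose M := flatten [seq flatten [seq B :: flatten [seq [seq A' ++ v :: B | A' <- Al v B]
   | v <- enum S] | B <- Bl X] | X <- LX].
have Step1 : size (PS S) <= size M.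
  apply: uniq_leq_size; first exact: paths_uniq.
  move=> P; rewrite mem_paths => /andP [GP SP].
  have [X XL Xmax] := argmax_seq (fun X => size (suf (nb e X) P)) LXn.
  have [pre EP] := suf_split (nb e X) P.
  move: Xmax EP; set B := suf (nb e X) P => Xmax EP.
  have IPB : ip e B by move: GP => /andP [_]; rewrite EP; exact: ip_catr.
  have inP : forall x, x \in P -> x \in S by move=> x /(allP SP).
  have BS : all (fun x => x \in S :\: nb e X) B.
    apply/allP => x xB; rewrite in_setD.
    rewrite (allP (suf_all (nb e X) P) x xB) /=; apply: inP; by rewrite EP mem_cat xB orbT.
  have BBl : B \in Bl X.
    rewrite /Bl inE; case: (eqVneq B [::]) => [-> //|Bn]; apply/orP; right.
    by rewrite /PS mem_paths /good Bn IPB BS.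
  apply/flatten_mapP; exists X => //; apply/flatten_mapP; exists B => //.
  case/lastP: pre EP => [|A' v] EP.
    by rewrite EP /=; exact: mem_head.
  rewrite cat_rcons in EP; rewrite inE; apply/orP; right.
  have vS : v \in S by apply: inP; rewrite EP mem_cat inE eqxx orbT.
  apply/flatten_mapP; exists v; first by rewrite mem_enum.
  apply/mapP; exists A' => //.
  set H := S :\: nb e (v :: B).
  have NC : ~~ C4b H.
    apply/hasPn => Y YL; apply/negP => /allP YH.
    have := Xmax Y YL => HY.
    have : ~~ all (fun y => y \notin nb e Y) (v :: B).
      apply/negP => AY; have := suf_max EP AY; rewrite /= => HY2.
      by have := leq_trans HY2 HY; rewrite ltnn.
    case/allPn => w wvB; rewrite negbK inE => /hasP [y yY /orP yw].
    have := YH y yY; rewrite in_setD => /andP [/negP []]; rewrite inE.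
    apply/hasP; exists w => //; case: yw => [/eqP -> | eyw]; first by rewrite eqxx.
    by rewrite esym eyw orbT.
  rewrite /Al (negbTE NC).
  case/lastP: A' EP => [|A u] EP; first by rewrite inE eqxx.
  rewrite inE; apply/orP; right.
  rewrite cat_rcons in EP.
  have uS : u \in S by apply: inP; rewrite EP mem_cat inE eqxx orbT.
  apply/flatten_mapP; exists u; first by rewrite mem_enum.
  apply/mapP; exists A => //.
  rewrite inE; case: (eqVneq A [::]) => [-> //|An]; apply/orP; right.
  rewrite /PS mem_paths /good An /=.
  have IP : ip e (A ++ u :: v :: B) by rewrite -EP; case/andP: GP.
  rewrite (ip_catl IP) /=.
  apply/allP => x xA; rewrite in_setD (inP x) ?andbT; last by rewrite EP mem_cat xA.
  rewrite inE; apply/hasPn => w wvB; rewrite negb_or.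
  have /andP [H1 H2] := ip_far IP xA wvB.
  by rewrite eq_sym H1 esym H2.
apply: (leq_trans Step1).
have n2 : 2 <= n.
  have [X XL] : exists X, X \in LX by case: (LX) LXn => // X l _; exists X; rewrite inE eqxx.
  have /andP [/and3P [Sz U _] A] := LXP X XL.
  have : size X <= size (enum S) by apply: uniq_leq_size => // x /(allP A); rewrite mem_enum.
  by rewrite /n cardE => H; apply: leq_trans H; apply: ltnW.
have sE : size (enum S) = n by rewrite -cardE.
have Hc : forall (Y : {set T}), Y \subset S -> ~~ C4b Y -> size (PS Y) <= #|Y| ^ c.
  move=> Y YS NC; apply: Hyp.
  - exact: (Ofree_mono HsS (leqnn s) YS).
  - move=> [cy /and3P [C Sz A]]; move/negP: NC; apply; apply/hasP; exists cy => //.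
    apply: LXC => //; apply/allP => x /(allP A); exact: (subsetP YS).
set K3 := 1 + n * (1 + (n - 1) ^ c).
have SAl : forall v B, v \in enum S -> size (Al v B) <= K3.
  move=> v B vS; rewrite /Al /= /K3 ltnS; case: ifP => // NC.
  apply: (leq_trans (size_flatten_le (K := 1 + (n - 1) ^ c) _)).
    move=> u _; rewrite /= size_map ltnS.
    apply: (leq_trans (Hc _ (subsetDl _ _) (negbT NC))).
    rewrite leq_exp2r; last lia.
    apply: (card_setD_lt (y := v)); first by rewrite -mem_enum.
    by apply: nb_self; rewrite inE eqxx.
  by rewrite sE.
set K2 := 1 + n * K3.
have SB : forall X B, B \in Bl X ->
   size (B :: flatten [seq [seq A' ++ v :: B | A' <- Al v B] | v <- enum S]) <= K2.
  move=> X B _; rewrite /K2 add1n.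
  change (size (flatten [seq [seq A' ++ v :: B | A' <- Al v B] | v <- enum S]) <= n * K3).
  apply: (leq_trans (size_flatten_le (K := K3) _)); last by rewrite sE.
  move=> v vS; rewrite size_map; exact: SAl.
set K1 := (1 + (n - 1) ^ a) * K2.
have SX : forall X, X \in LX -> size (flatten [seq B :: flatten
     [seq [seq A' ++ v :: B | A' <- Al v B] | v <- enum S] | B <- Bl X]) <= K1.
  move=> X XL; apply: (leq_trans (size_flatten_le (K := K2) _)); first exact: SB.
  rewrite /K1 leq_mul2r; apply/orP; right.
  rewrite /Bl /= ltnS.
  have /andP [CX AX] := LXP X XL.
  apply: (leq_trans (IH _ (Ofree_del esym HS CX AX))).
  rewrite leq_exp2r; last lia.
  have [x xX] : exists x, x \in X.
    by move: CX => /and3P []; case: X {XL AX} => // x X _ _ _; exists x; rewrite inE eqxx.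
  apply: (card_setD_lt (y := x)); first exact: (allP AX).
  exact: nb_self.
apply: (leq_trans (size_flatten_le (K := K1) _)); first exact: SX.
have SLX : size LX <= n ^ 4.
  rewrite size_filter; apply: (leq_trans (count_size _ _)).
  by apply: (leq_trans (size_seqs_len_le _ _)); rewrite sE.
apply: (leq_trans (leq_mul SLX (leqnn K1))).
by apply: arith => //; rewrite /a; lia.
Qed.

End MainInd.


Definition K2 : rel bool := fun a b => a != b.

Lemma K2_simple : simple_graph K2.
Proof. by split => [a b|a]; rewrite /K2 ?eqxx // (eq_sym a). Qed.

Lemma bool_no_cycle cy : is_cycle K2 cy -> False.
Proof.
move=> /and3P [Sz U _]; move/card_uniqP: U => E.
have := max_card (mem cy); rewrite E card_bool; lia.
Qed.

Lemma K2_sO s : 1 <= s -> sO_free s K2.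
Proof.
move=> s1 [f [F _]]; exact: (bool_no_cycle (F (Ordinal s1))).
Qed.

Lemma K2_noC4 : no_C4 K2.
Proof. by move=> [cy [C _]]; exact: bool_no_cycle C. Qed.

Lemma K2_num : 4 <= num_ordered_induced_paths K2.
Proof.
rewrite num_eq; [|by move=> a b; rewrite /K2 (eq_sym a)|by move=> a; rewrite /K2 eqxx].
have -> : 4 = size [:: [:: true]; [:: false]; [:: true; false]; [:: false; true]] by [].
apply: uniq_leq_size => // x; rewrite !inE => /or4P [] /eqP ->; by rewrite mem_paths.
Qed.

Unset Implicit Arguments.

Theorem mainTheorem4 (s c : nat) :
  1 <= s -> 1 <= c ->
  (forall (T : finType) (e : rel T),
      simple_graph e -> sO_free s e -> no_C4 e ->
      num_ordered_induced_paths e <= #|T| ^ c) ->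
  forall (T : finType) (e : rel T),
    simple_graph e -> sO_free s e ->
    num_ordered_induced_paths e <= #|T| ^ (2 + (s - 1) * (c + 6)).
Proof.
move=> s1 c1 HypG T e [esym eirr] HsO.
have c2 : 2 <= c.
  have := HypG _ _ K2_simple (K2_sO s1) K2_noC4; have := K2_num.
  rewrite card_bool; move: c1; case: (c) => [|[|c']] //= _; lia.
have HypS : forall S : {set T}, Ofree e s S -> noC4 e S ->
    size (paths e (fun x => x \in S)) <= #|S| ^ c.
  move=> S HS HC; apply: (leq_trans (paths_sub e S)).
  rewrite -num_eq; last by move=> x; rewrite /eS /= eirr.
    by rewrite -(card_ST S); apply: HypG; [exact: simple_ST | exact: sO_free_ST | exact: no_C4_ST].
  by move=> x y; rewrite /eS /= esym.
have HT : Ofree e (s - 1).+1 [set: T].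
  rewrite subn1 prednK //; move=> [f [F1 F2]]; apply: HsO; exists f; split => // i.
  by case/andP: (F1 i).
have Hlt : s - 1 < s by lia.
have := main esym c2 HypS Hlt HT.
rewrite cardsT num_eq //.
have -> : paths e predT = paths e (fun x => x \in [set: T]).
  by apply: eq_paths => x; rewrite in_setT.
by [].
Qed.
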